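(* Let $P$ be a Banach measure on $\mathbf{N}$. Define $g:\mathbf{N}\times\mathbf{N}\to\mathbb{R}$ by $g(\omega_1,\omega_2)=1$ if $\xi_{\omega_1}(\omega_2)\equiv 0\pmod 2$ and $g(\omega_1,\omega_2)=0$ otherwise. Assume the Collatz conjecture holds. Then $g\in\mathcal{G}$, i.e. $$\int_{\mathbf{N}}\Big(\int_{\mathbf{N}} g(\omega_1,\omega_2)\,dP(\omega_2)\Big)dP(\omega_1)=\int_{\mathbf{N}}\Big(\int_{\mathbf{N}} g(\omega_1,\omega_2)\,dP(\omega_1)\Big)dP(\omega_2)$$ (both being equal to $2/3$).
   Context: $\mathbf{N}=\{1,2,3,\dots\}$. A Banach measure is a finitely additive probability measure $P$ defined on all subsets of $\mathbf{N}$ that is shift-invariant: $P(X+1)=P(X)$ for all $X\subseteq\mathbf{N}$, where $X+1=\{x+1:x\in X\}$. For bounded $f:\mathbf{N}\to\mathbb{R}$, $\int f\,dP$ is the integral with respect to the finitely additive measure $P$ (the unique positive linear functional on bounded functions with $\int 1_A\,dP=P(A)$). $\mathcal{G}$ denotes the class of functions $f:\mathbf{N}\times\mathbf{N}\to\mathbb{R}$ for which the two iterated integrals $\int(\int f(\omega_1,\omega_2)\,dP(\omega_2))dP(\omega_1)$ and $\int(\int f(\omega_1,\omega_2)\,dP(\omega_1))dP(\omega_2)$ are equal. The Collatz map $\xi:\mathbf{N}\to\mathbf{N}$ is $\xi(\omega)=\omega/2$ if $\omega$ is even and $\xi(\omega)=3\omega+1$ if $\omega$ is odd; $\xi_n$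 is its $n$-fold iterate. The Collatz conjecture is the statement: for every $\omega\in\mathbf{N}$ there exists $n$ with $\xi_n(\omega)=1$. *)

(* Defs.v *)
(* classical reals. N = {1,2,3,...} is modelled by Stdlib's [positive]. *)
From Stdlib Require Import Reals PArith.
Open Scope R_scope.

Definition pset := positive -> Prop.

Definition shift1 (X : pset) : pset := fun y => exists x, X x /\ y = Pos.succ x.

Definition banach_measure (P : pset -> R) : Prop :=
  (forall X, 0 <= P X) /\
  P (fun _ => True) = 1 /\
  (forall X Y : pset, (forall x, X x -> Y x -> False) ->
      P (fun x => X x \/ Y x) = P X + P Y) /\
  (forall X, P (shift1 X) = P X).

Definition bounded (f : positive -> R) : Prop :=
  exists M, forall x, Rabs (f x) <= M.

(* [I] is the integral w.r.t. P: a positive linear functional on the bounded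
   functions with I(1_A) = P(A) for every A (this determines I uniquely on
   bounded functions; its values on unbounded functions are irrelevant). *)
Definition is_integral (P : pset -> R) (I : (positive -> R) -> R) : Prop :=
  (forall f g, bounded f -> bounded g -> I (fun x => f x + g x) = I f + I g) /\
  (forall (c : R) f, bounded f -> I (fun x => c * f x) = c * I f) /\
  (forall f, bounded f -> (forall x, 0 <= f x) -> 0 <= I f) /\
  (forall (A : pset) (f : positive -> R),
      (forall x, (A x -> f x = 1) /\ (~ A x -> f x = 0)) -> I f = P A).

Definition pos_even (p : positive) : bool :=
  match p with xO _ => true | _ => false end.

Definition collatz (w : positive) : positive :=
  if pos_even w then Pos.div2 w else (3 * w + 1)%positive.

Definition collatz_iter (n : nat) (w : positive) : positive := Nat.iter n collatz w.

Definition collatz_conjecture : Prop :=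
  forall w : positive, exists n : nat, collatz_iter n w = 1%positive.

Definition gfun (w1 w2 : positive) : R :=
  if pos_even (collatz_iter (Pos.to_nat w1) w2) then 1 else 0.

(* Main.v *)
Require Import Defs.
From Stdlib Require Import Reals PArith ZArith Lia Lra FunctionalExtensionality PropExtensionality Classical.
Open Scope R_scope.

Lemma Pext (P : pset -> R) (A B : pset) : (forall x, A x <-> B x) -> P A = P B.
Proof. intros H. f_equal. apply functional_extensionality; intro x.
  apply propositional_extensionality; auto. Qed.

Lemma P_empty P : banach_measure P -> P (fun _ => False) = 0.
Proof. intros (h0&h1&hadd&hs).
  assert (E := hadd (fun _ => False) (fun _ => False) (fun _ a _ => a)).
  cbv beta in E. rewrite (Pext P (fun x => False \/ False) (fun _ => False)) in E by tauto. lra. Qed.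

Lemma P_mono P (A B : pset) : banach_measure P -> (forall x, A x -> B x) -> P A <= P B.
Proof. intros (h0&h1&hadd&hs) H.
  rewrite (Pext P B (fun x => A x \/ (B x /\ ~ A x))).
  - rewrite hadd. specialize (h0 (fun x => B x /\ ~ A x)). lra. intros x a [_ b]; auto.
  - intro x. split. intro b. destruct (classic (A x)); auto. intros [a|[b _]]; auto. Qed.

Definition sing (k : nat) : pset := fun w => Pos.to_nat w = k.
Definition seg (K : nat) : pset := fun w => (Pos.to_nat w <= K)%nat.

Lemma shift_sing P : banach_measure P -> forall k, (1 <= k)%nat -> P (sing (S k)) = P (sing k).
Proof. intros hP k hk. destruct hP as (h0&h1&hadd&hs). rewrite <- (hs (sing k)).
  apply Pext. intro y; unfold shift1, sing. split.
  - intro Hy. assert (y <> 1%positive) by (intro; subst; simpl in Hy; lia).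
    exists (Pos.pred y). pose proof (Pos.succ_pred y H) as E. split; auto.
    rewrite <- E in Hy. rewrite Pos2Nat.inj_succ in Hy. lia.
  - intros [x [Hx ->]]. rewrite Pos2Nat.inj_succ; lia. Qed.

Lemma sing_eq P : banach_measure P -> forall k, P (sing (S k)) = P (sing 1).
Proof. intros hP k. induction k. reflexivity. rewrite shift_sing; auto; lia. Qed.

Lemma seg_eq P : banach_measure P -> forall K, P (seg K) = INR K * P (sing 1).
Proof. intros hP K. induction K.
  - simpl. rewrite (Pext P _ (fun _ => False)). rewrite P_empty; auto. lra.
    intro x; unfold seg; pose proof (Pos2Nat.is_pos x); split; intros; lia.
  - rewrite (Pext P _ (fun x => seg K x \/ sing (S K) x)).
    + pose proof hP as (h0&h1&hadd&hs). rewrite hadd. rewrite (sing_eq P hP K), IHK. rewrite S_INR. lra.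
      unfold seg, sing; intros; lia.
    + unfold seg, sing; intros; lia. Qed.

Lemma sing1_zero P : banach_measure P -> P (sing 1) = 0.
Proof. intros hP. pose proof hP as (h0&h1&hadd&hs).
  destruct (Rle_lt_or_eq_dec 0 _ (h0 (sing 1))) as [Hc|Hc]; [|auto].
  destruct (archimed_cor1 _ Hc) as [N [HN HN0]].
  assert (P (seg N) <= 1). { rewrite <- h1. apply P_mono; auto. }
  rewrite seg_eq in H by auto.
  assert (0 < INR N) by (apply lt_0_INR; lia).
  apply (Rmult_lt_compat_l (INR N)) in HN; auto. rewrite Rinv_r in HN by lra. lra. Qed.

Lemma seg_zero P : banach_measure P -> forall K, P (seg K) = 0.
Proof. intros. rewrite seg_eq, sing1_zero; auto. ring. Qed.

Lemma P_ev P (A B : pset) K : banach_measure P ->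
  (forall w, (K < Pos.to_nat w)%nat -> (A w <-> B w)) -> P A = P B.
Proof. intros hP H.
  assert (forall C : pset, P C = P (fun w => C w /\ seg K w) + P (fun w => C w /\ ~ seg K w)).
  { intro C. pose proof hP as (h0&h1&hadd&hs). rewrite <- hadd.
    apply Pext. intro x; destruct (classic (seg K x)); tauto. intros x [_ a] [_ b]; auto. }
  assert (forall C : pset, P (fun w => C w /\ seg K w) = 0).
  { intro C. pose proof hP as (h0&_). apply Rle_antisym; auto.
    rewrite <- (seg_zero P hP K). apply P_mono; auto. intros x []; auto. }
  rewrite (H0 A), (H0 B), !H1. f_equal. apply Pext. intro x. unfold seg.
  destruct (Nat.le_gt_cases (Pos.to_nat x) K). tauto. specialize (H x H2). tauto. Qed.

Definition Ccl (m r : Z) : pset := fun w => (Z.pos w mod m = r)%Z.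

Lemma mod_char (a m r : Z) : (0 <= r < m)%Z -> ((a mod m = r)%Z <-> exists q, a = (q*m + r)%Z).
Proof. intros Hr. split.
  - intro H. exists (a / m)%Z. pose proof (Z.div_mod a m ltac:(lia)). rewrite H in H0. lia.
  - intros [q ->]. rewrite Z.add_comm, Z_mod_plus_full. apply Z.mod_small; auto. Qed.

Lemma class_step P m r : banach_measure P -> (0 <= r)%Z -> (r + 1 < m)%Z ->
  P (Ccl m (r+1)) = P (Ccl m r).
Proof. intros hP H0 H1. pose proof hP as (h0&h1&hadd&hs). rewrite <- (hs (Ccl m r)).
  apply (P_ev P _ _ 1). auto. intros y Hy. unfold shift1, Ccl.
  rewrite (mod_char _ m (r+1)) by lia. split.
  - intros [q Hq]. exists (Pos.pred y).
    assert (y <> 1%positive) by (intro; subst; simpl in Hy; lia).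
    pose proof (Pos.succ_pred y H) as E. split; auto.
    apply mod_char. lia. exists q. rewrite <- E in Hq. rewrite Pos2Z.inj_succ in Hq. lia.
  - intros [x [Hx ->]]. apply mod_char in Hx; [|lia]. destruct Hx as [q Hq]. exists q.
    rewrite Pos2Z.inj_succ. lia. Qed.

Lemma class_eq P m : banach_measure P -> forall k, (Z.of_nat k < m)%Z -> P (Ccl m (Z.of_nat k)) = P (Ccl m 0).
Proof. intros hP k. induction k; intros. reflexivity.
  rewrite Nat2Z.inj_succ, <- Z.add_1_r, class_step; auto; try lia. apply IHk; lia. Qed.

Lemma class_val P m r : banach_measure P -> (0 < m)%Z -> (0 <= r < m)%Z -> P (Ccl m r) = / IZR m.
Proof. intros hP Hm Hr. pose proof hP as (h0&h1&hadd&hs).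
  assert (forall k, (k <= Z.to_nat m)%nat -> P (fun w => (Z.pos w mod m < Z.of_nat k)%Z) = INR k * P (Ccl m 0)).
  { induction k; intros.
    - rewrite (Pext P _ (fun _ => False)). rewrite P_empty; auto. simpl; lra.
      intro x; pose proof (Z.mod_pos_bound (Z.pos x) m Hm); simpl; split; intros; lia.
    - rewrite (Pext P _ (fun x => (Z.pos x mod m < Z.of_nat k)%Z \/ Ccl m (Z.of_nat k) x)).
      + rewrite hadd. rewrite IHk by lia. rewrite class_eq by (auto; lia). rewrite S_INR; lra.
        unfold Ccl; intros; lia.
      + unfold Ccl; intros; lia. }
  specialize (H (Z.to_nat m) (le_n _)).
  rewrite (Pext P _ (fun _ => True)) in H.
  2:{ intro x; pose proof (Z.mod_pos_bound (Z.pos x) m Hm); split; intros; auto; lia. }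
  idtac "HERE". rewrite h1 in H. rewrite INR_IZR_INZ, Z2Nat.id in H by lia.
  assert (IZR m <> 0) by (apply not_0_IZR; lia).
  replace r with (Z.of_nat (Z.to_nat r)) by lia. rewrite class_eq by (auto; lia).
  apply (Rmult_eq_reg_l (IZR m)); auto. rewrite <- H. field; auto. Qed.

Lemma collatz_Z x : (Z.odd (Z.pos x) = false /\ Z.pos x = (2 * Z.pos (collatz x))%Z) \/
  (Z.odd (Z.pos x) = true /\ Z.pos (collatz x) = (3 * Z.pos x + 1)%Z).
Proof. destruct x.
  - right. split. reflexivity. unfold collatz; simpl pos_even; cbv iota.
    rewrite Pos2Z.inj_add, Pos2Z.inj_mul. reflexivity.
  - left. split. reflexivity. reflexivity.
  - right. split. reflexivity. reflexivity. Qed.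

Lemma pos_even_odd x : pos_even x = negb (Z.odd (Z.pos x)).
Proof. destruct x; reflexivity. Qed.

Lemma odd_mod a m : (m <> 0)%Z -> Z.odd (a mod (2*m)) = Z.odd a.
Proof. intros Hm. pose proof (Z.div_mod a (2*m)%Z ltac:(lia)) as E.
  rewrite E at 2. rewrite Z.odd_add, <- Z.mul_assoc, Z.odd_mul. simpl. destruct (Z.odd _); reflexivity. Qed.

Fixpoint p2 (j : nat) : Z := match j with O => 1%Z | S j => (2 * p2 j)%Z end.
Lemma p2S j : p2 (S j) = (2 * p2 j)%Z. Proof. reflexivity. Qed.
Lemma p2_pos j : (0 < p2 j)%Z. Proof. induction j; rewrite ?p2S; simpl p2; lia. Qed.
Lemma IZR_p2 j : IZR (p2 (S j)) = 2 * IZR (p2 j). Proof. rewrite p2S, mult_IZR. reflexivity. Qed.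

Lemma inv3 j : exists t k, (3*t = 1 + k * p2 j)%Z.
Proof. induction j. exists 1%Z, 2%Z. reflexivity.
  destruct IHj as [t [k H]]. destruct (Z.Even_or_Odd k) as [[k' ->]|[k' ->]].
  - exists t, k'. rewrite p2S. lia.
  - exists (t + p2 j)%Z, (k'+2)%Z. rewrite p2S. lia. Qed.

Fixpoint ee (n : nat) : R := match n with O => /2 | S n => 1 - ee n / 2 end.

Definition Qs n m r : pset := fun w => (Z.pos (collatz_iter n w) mod m = r)%Z.

Definition Hinv P n := forall j r, (0 <= r < p2 (S j))%Z ->
   (Z.odd r = false -> P (Qs n (p2 (S j)) r) = ee n / IZR (p2 j)) /\
   (Z.odd r = true -> P (Qs n (p2 (S j)) r) = (1 - ee n) / IZR (p2 j)).

Lemma Hinv0 P : banach_measure P -> Hinv P 0.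
Proof. intros hP j r Hr. assert (P (Qs 0 (p2 (S j)) r) = / IZR (p2 (S j))).
  { apply class_val; auto. apply p2_pos. }
  rewrite H, IZR_p2. assert (IZR (p2 j) <> 0) by (apply not_0_IZR; pose proof (p2_pos j); lia).
  simpl ee. split; intros; field; auto. Qed.

Lemma even_case (y m r : Z) : (0 <= r < m)%Z -> ((y mod m = r)%Z <-> ((2*y) mod (2*m) = 2*r)%Z).
Proof. intros Hr. rewrite !mod_char by lia. split; intros [q Hq]; exists q; lia. Qed.

Lemma odd_case (x m r t k : Z) : (0 <= r < m)%Z -> (3*t = 1 + k*m)%Z ->
  (((3*x+1) mod m = r)%Z <-> (x mod m = (t*(r-1)) mod m)%Z).
Proof. intros Hr Ht. split.
  - intros H. apply mod_char in H; auto. destruct H as [q Hq].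
    pose proof (f_equal (fun z => x*z)%Z Ht). pose proof (f_equal (fun z => t*z)%Z Hq). cbv beta in *.
    assert (x = (t*q - x*k)*m + t*(r-1))%Z by lia. rewrite H1 at 1.
    rewrite Z.add_comm, Z_mod_plus_full. reflexivity.
  - intros H. apply mod_char; auto.
    assert (m <> 0)%Z by lia.
    pose proof (Z.div_mod x m H0). pose proof (Z.div_mod (t*(r-1)) m H0).
    pose proof (f_equal (fun z => (r-1)*z)%Z Ht). cbv beta in *.
    exists (3*(x/m - (t*(r-1))/m) + k*(r-1))%Z. lia. Qed.

Lemma iterS n w : collatz_iter (S n) w = collatz (collatz_iter n w).
Proof. reflexivity. Qed.

Lemma Hinv_step P n : banach_measure P -> Hinv P n -> Hinv P (S n).
Proof. intros hP H j r Hr. pose proof hP as (h0&h1&hadd&hs).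
  set (m := p2 (S j)) in *. assert (Hm2 : m = (2 * p2 j)%Z) by reflexivity.
  pose proof (p2_pos j) as Hpj.
  assert (Hpz : IZR (p2 j) <> 0) by (apply not_0_IZR; lia).
  assert (H2r : P (Qs n (2*m) (2*r)) = ee n / IZR m).
  { destruct (H (S j) (2*r)%Z) as [Ha _]. change (p2 (S (S j))) with (2*m)%Z. lia.
    change (2*m)%Z with (p2 (S (S j))). apply Ha. rewrite Z.odd_mul. reflexivity. }
  assert (Hodd2r : forall x, (Z.pos x mod (2*m) = 2*r)%Z -> Z.odd (Z.pos x) = false).
  { intros x Hx. rewrite <- (odd_mod _ m) by lia. rewrite Hx.
    rewrite Z.odd_mul. reflexivity. }
  destruct (inv3 (S j)) as [t [k Ht]]. fold m in Ht.
  split; intro Hpar.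
  - set (s := ((t*(r-1)) mod m)%Z).
    assert (Hs : (0 <= s < m)%Z) by (apply Z.mod_pos_bound; lia).
    assert (Hso : Z.odd s = true).
    { unfold s. rewrite Hm2, odd_mod by lia. rewrite Z.odd_mul.
      assert (Z.odd t = true).
      { destruct (Z.Even_or_Odd t) as [[u Hu]|[u Hu]]. exfalso. rewrite Hm2 in Ht. lia.
        rewrite Hu. rewrite Z.odd_add, Z.odd_mul. reflexivity. }
      rewrite H0. rewrite Z.odd_sub, Hpar. reflexivity. }
    assert (Hsx : forall x, (Z.pos x mod m = s)%Z -> Z.odd (Z.pos x) = true).
    { intros x Hx. rewrite Hm2 in Hx. rewrite <- (odd_mod _ (p2 j)) by lia. rewrite Hx. auto. }
    rewrite (Pext P _ (fun w => Qs n (2*m) (2*r) w \/ Qs n m s w)).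
    + rewrite hadd. rewrite H2r. destruct (H j s Hs) as [_ Hb]. pose proof (Hb Hso) as Hb'. fold m in Hb'. rewrite Hb'.
      rewrite Hm2, mult_IZR. simpl ee. field. auto.
      intros w A B. unfold Qs in *. apply Hodd2r in A. apply Hsx in B. congruence.
    + intro w. unfold Qs. rewrite iterS. set (x := collatz_iter n w).
      destruct (collatz_Z x) as [[Ho E]|[Ho E]].
      * split.
        -- intro A. left. unfold Qs. rewrite E, <- even_case by lia. exact A.
        -- intros [A|A]. rewrite E, <- even_case in A by lia. exact A. apply Hsx in A. congruence.
      * rewrite E. rewrite (odd_case _ m r t k) by (auto; lia). fold s. split; [tauto|].
        intros [A|A]; auto. apply Hodd2r in A. congruence.
  - rewrite (Pext P _ (Qs n (2*m) (2*r))).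
    + rewrite H2r. rewrite Hm2, mult_IZR. simpl ee. field. auto.
    + intro w. unfold Qs. rewrite iterS. set (x := collatz_iter n w).
      destruct (collatz_Z x) as [[Ho E]|[Ho E]].
      * rewrite E, <- even_case by lia. tauto.
      * rewrite E. split; intro A.
        -- exfalso. assert (Z.odd ((3 * Z.pos x + 1) mod m) = false).
           { rewrite Hm2, odd_mod by lia. rewrite Z.odd_add, Z.odd_mul, Ho. reflexivity. }
           congruence.
        -- apply Hodd2r in A. congruence. Qed.

Lemma Hinv_all P : banach_measure P -> forall n, Hinv P n.
Proof. intros hP n. induction n. apply Hinv0; auto. apply Hinv_step; auto. Qed.

Lemma Iext (I : (positive -> R) -> R) f g : (forall x, f x = g x) -> I f = I g.
Proof. intros H. f_equal. apply functional_extensionality; auto. Qed.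

Lemma bnd_const (c : R) : Defs.bounded (fun _ => c). Proof. exists (Rabs c); intros; lra. Qed.
Lemma bnd_scal (c : R) f : Defs.bounded f -> Defs.bounded (fun x => c * f x).
Proof. intros [M HM]. exists (Rabs c * M). intros x. rewrite Rabs_mult.
  apply Rmult_le_compat_l; auto. apply Rabs_pos. Qed.
Lemma bnd_add f g : Defs.bounded f -> Defs.bounded g -> Defs.bounded (fun x => f x + g x).
Proof. intros [M HM] [N HN]. exists (M+N). intros x. eapply Rle_trans. apply Rabs_triang.
  specialize (HM x); specialize (HN x); lra. Qed.

Lemma I_const P I : banach_measure P -> is_integral P I -> forall c, I (fun _ => c) = c.
Proof. intros hP (ha&hc&hp&hind) c. pose proof hP as (h0&h1&_).
  rewrite (Iext I (fun _ => c) (fun x => c * (fun _ => 1) x)) by (intros; simpl; ring).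
  rewrite (hc c (fun _ => 1)) by apply bnd_const.
  rewrite (hind (fun _ => True)). rewrite h1; ring. intros; split; tauto. Qed.

Lemma I_mono P I : banach_measure P -> is_integral P I -> forall f g, Defs.bounded f -> Defs.bounded g ->
  (forall x, f x <= g x) -> I f <= I g.
Proof. intros hP hI f g bf bg H. pose proof hI as (ha&hc&hp&hind).
  assert (0 <= I (fun x => g x + (fun y => -1 * f y) x)).
  { apply hp. apply bnd_add; auto. apply bnd_scal; auto. intros x; specialize (H x); lra. }
  rewrite ha, hc in H0; auto. lra. apply bnd_scal; auto. Qed.

Lemma I_small P I : banach_measure P -> is_integral P I -> forall f M eps K,
  0 <= eps -> (forall x, Rabs (f x) <= M) -> (forall x, (K < Pos.to_nat x)%nat -> Rabs (f x) <= eps) ->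
  Rabs (I f) <= eps.
Proof. intros hP hI f M eps K He HM HK. pose proof hI as (ha&hc&hp&hind).
  set (chi := fun x => if Nat.leb (Pos.to_nat x) K then 1 else 0).
  assert (Hchi : I chi = 0).
  { rewrite (hind (seg K)). apply seg_zero; auto. intro x; unfold chi, seg.
    destruct (Nat.leb_spec (Pos.to_nat x) K); split; intros; try lia; auto; lra. }
  assert (bchi : Defs.bounded chi). { exists 1. intro x; unfold chi; destruct (Nat.leb _ _); rewrite ?Rabs_R1, ?Rabs_R0; lra. }
  assert (bf : Defs.bounded f) by (exists M; auto).
  set (g := fun x => (fun _ => eps) x + (fun y => M * chi y) x).
  assert (bg : Defs.bounded g) by (apply bnd_add; [apply bnd_const| apply bnd_scal; auto]).
  assert (Ig : I g = eps). { unfold g. rewrite ha, hc, Hchi, (I_const P I hP hI) by (auto; apply bnd_const || apply bnd_scal; auto). ring. }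
  assert (M0 : 0 <= M) by (eapply Rle_trans; [apply Rabs_pos|apply (HM 1%positive)]).
  assert (Hfg : forall x, Rabs (f x) <= g x).
  { intro x. unfold g, chi. destruct (Nat.leb_spec (Pos.to_nat x) K).
    specialize (HM x); lra. specialize (HK x H); lra. }
  assert (Hu : I f <= I g).
  { apply (I_mono P I hP hI); auto. intro x. specialize (Hfg x). pose proof (Rle_abs (f x)). lra. }
  assert (Hl : I (fun x => -1 * f x) <= I g).
  { apply (I_mono P I hP hI); auto. apply bnd_scal; auto. intro x. specialize (Hfg x).
    pose proof (Rle_abs (- f x)). rewrite Rabs_Ropp in H. lra. }
  rewrite hc in Hl by auto. apply Rabs_le. lra. Qed.

Lemma zero_of_small x : (forall K, Rabs x <= (/2)^K) -> x = 0.
Proof. intros H. destruct (Req_dec x 0); auto. exfalso.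
  assert (Hx : 0 < Rabs x) by (apply Rabs_pos_lt; auto).
  assert (Rabs (/2) < 1) by (rewrite Rabs_pos_eq; lra).
  destruct (pow_lt_1_zero _ H1 _ Hx) as [N HN]. specialize (HN N (le_n _)).
  rewrite <- RPow_abs, Rabs_pos_eq in HN by lra. specialize (H N). lra. Qed.

Lemma pow_half_le a b : (a <= b)%nat -> (/2)^b <= (/2)^a.
Proof. intros H. induction H. lra. simpl. pose proof (pow_le (/2) m ltac:(lra)). lra. Qed.

Lemma ee_closed n : ee n = 2/3 - /6 * (-/2)^n.
Proof. induction n. simpl; field. simpl ee. rewrite IHn. simpl. field. Qed.

Lemma partA P I : banach_measure P -> is_integral P I -> forall w1,
  I (fun w2 => gfun w1 w2) = ee (Pos.to_nat w1).
Proof. intros hP hI w1. pose proof hI as (ha&hc&hp&hind).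
  set (n := Pos.to_nat w1).
  rewrite (hind (Qs n (p2 1) 0%Z)).
  - destruct (Hinv_all P hP n 0%nat 0%Z ltac:(simpl; lia)) as [Ha _]. rewrite Ha by reflexivity.
    simpl. field.
  - intro w. unfold gfun, Qs. fold n. rewrite pos_even_odd.
    set (y := Z.pos (collatz_iter n w)).
    change (p2 1) with (2 * 1)%Z. rewrite <- (odd_mod y 1) by lia.
    pose proof (Z.mod_pos_bound y (2*1) ltac:(lia)).
    assert (y mod (2*1) = 0 \/ y mod (2*1) = 1)%Z as [E|E] by lia; rewrite E; simpl;
      split; intros; try lra; try discriminate; tauto. Qed.

Lemma iter3 q : collatz_iter (3*q) 1 = 1%positive.
Proof. induction q. reflexivity. replace (3 * S q)%nat with (3 + 3*q)%nat by lia.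
  unfold collatz_iter in *. rewrite Nat.iter_add, IHq. reflexivity. Qed.

Lemma cyc k : pos_even (collatz_iter k 1) = negb (Nat.eqb (k mod 3) 0).
Proof. rewrite (Nat.div_mod_eq k 3) at 1. rewrite Nat.add_comm.
  unfold collatz_iter. rewrite Nat.iter_add. fold (collatz_iter (3 * (k/3)) 1). rewrite iter3.
  pose proof (Nat.mod_upper_bound k 3 ltac:(lia)).
  destruct (k mod 3) as [|[|[|]]]; try reflexivity; lia. Qed.

Lemma partB P I : banach_measure P -> is_integral P I -> collatz_conjecture -> forall w2,
  I (fun w1 => gfun w1 w2) = 2/3.
Proof. intros hP hI hC w2. pose proof hI as (ha&hc&hp&hind). pose proof hP as (h0&h1&hadd&hs).
  destruct (hC w2) as [n0 Hn0].
  set (r0 := Z.of_nat (n0 mod 3)).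
  rewrite (hind (fun w1 => pos_even (collatz_iter (Pos.to_nat w1) w2) = true)).
  2:{ intro x; unfold gfun. destruct (pos_even _); split; intros; try discriminate; auto; tauto. }
  rewrite (P_ev P _ (fun w => ~ Ccl 3 r0 w) n0); auto.
  - assert (Hc : P (Ccl 3 r0) = / IZR 3) by (apply class_val; auto; unfold r0; pose proof (Nat.mod_upper_bound n0 3 ltac:(lia)); lia).
    assert (P (fun w => Ccl 3 r0 w \/ ~ Ccl 3 r0 w) = 1).
    { rewrite <- h1. apply Pext. intro; split; auto. intros _; apply classic. }
    rewrite hadd in H by tauto. rewrite Hc in H. simpl in H. lra.
  - intros w Hw. unfold Ccl, r0.
    replace (Pos.to_nat w) with ((Pos.to_nat w - n0) + n0)%nat by lia.
    unfold collatz_iter. rewrite Nat.iter_add. fold (collatz_iter n0 w2). rewrite Hn0.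
    fold (collatz_iter (Pos.to_nat w - n0) 1). rewrite cyc.
    rewrite <- positive_nat_Z, <- (Nat2Z.inj_mod _ 3) , Nat2Z.inj_iff.
    assert (((Pos.to_nat w - n0) mod 3 = 0)%nat <-> (Pos.to_nat w mod 3 = n0 mod 3)%nat).
    { set (a := Pos.to_nat w) in *.
      pose proof (Nat.div_mod_eq (a-n0) 3). pose proof (Nat.div_mod_eq a 3). pose proof (Nat.div_mod_eq n0 3).
      pose proof (Nat.mod_upper_bound (a-n0) 3). pose proof (Nat.mod_upper_bound a 3).
      pose proof (Nat.mod_upper_bound n0 3). lia. }
    replace (Pos.to_nat w - n0 + n0)%nat with (Pos.to_nat w) by lia.
    destruct (Nat.eqb_spec ((Pos.to_nat w - n0) mod 3) 0); simpl; split; intros; tauto || discriminate || (exfalso; tauto). Qed.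

Theorem theorem5p1 (P : pset -> R) (I : (positive -> R) -> R)
  (hP : banach_measure P) (hI : is_integral P I)
  (hC : collatz_conjecture) :
  I (fun w1 => I (fun w2 => gfun w1 w2)) = I (fun w2 => I (fun w1 => gfun w1 w2))
  /\ I (fun w1 => I (fun w2 => gfun w1 w2)) = 2 / 3.
Proof.
  assert (HA : I (fun w1 => I (fun w2 => gfun w1 w2)) = 2/3).
  { pose proof hI as (ha&hc&hp&hind).
    set (h := fun w : positive => (-/2)^(Pos.to_nat w)).
    assert (bh : Defs.bounded h).
    { exists 1. intro x. unfold h. rewrite <- RPow_abs. rewrite Rabs_Ropp, Rabs_pos_eq by lra.
      apply (pow_half_le 0). lia. }
    assert (Ih : I h = 0).
    { apply zero_of_small. intro K. apply (I_small P I hP hI h 1 _ K).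
      apply pow_le; lra.
      - intro x. unfold h. rewrite <- RPow_abs. rewrite Rabs_Ropp, Rabs_pos_eq by lra.
        apply (pow_half_le 0). lia.
      - intros x Hx. unfold h. rewrite <- RPow_abs. rewrite Rabs_Ropp, Rabs_pos_eq by lra.
        apply pow_half_le. lia. }
    rewrite (Iext I _ (fun w => (fun _ => 2/3) w + (fun y => -/6 * h y) w)).
    - rewrite ha, hc, Ih, (I_const P I hP hI); auto. ring. apply bnd_const. apply bnd_scal; auto.
    - intro w1. rewrite (partA P I hP hI w1), ee_closed. unfold h. ring. }
  split; auto. rewrite HA.
  rewrite (Iext I _ (fun _ => 2/3)). symmetry. apply (I_const P I hP hI).
  intro w2. apply (partB P I hP hI hC). Qed.
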